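(* Let $A,B\in\mathbb{C}^{n\times n}$ and let $C=A+B$. If $C$ is nonderogatory, then \[\frac{n-d(A)}{\operatorname{rank}(B)+1}\leq|\Lambda(A)|\leq n-d(A).\]
   Context: For $M\in\mathbb{C}^{n\times n}$, $\Lambda(M)$ denotes the set of distinct eigenvalues of $M$ and $|\cdot|$ the cardinality of a set. For $\lambda\in\Lambda(M)$, $m_a(M,\lambda)$ is its algebraic multiplicity and $m_g(M,\lambda)$ its geometric multiplicity. The defectivity of $M$ is $d(M):=\sum_{\lambda\in\Lambda(M)}\big(m_a(M,\lambda)-m_g(M,\lambda)\big)$. $M$ is called nonderogatory if $m_g(M,\lambda)=1$ for every $\lambda\in\Lambda(M)$. *)

(* Defs.v *)
From HB Require Import structures.
From mathcomp Require Import all_boot all_order all_algebra.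
From mathcomp Require Import complex.
From Stdlib Require Rdefinitions.
From mathcomp Require Import Rstruct.

Set Implicit Arguments. Unset Strict Implicit. Unset Printing Implicit Defensive.
Import Order.TTheory GRing.Theory Num.Theory.
Local Open Scope ring_scope.

Definition Cplx : numClosedFieldType := complex Rdefinitions.R.

Section Spectral.
Variable F : closedFieldType.
Variable n : nat.

(* Λ(M): the distinct eigenvalues of M, as a duplicate-free list: the
   distinct roots of the characteristic polynomial (which splits). *)
Definition spectrum (M : 'M[F]_n) : seq F :=
  undup (sval (closed_field_poly_normal (char_poly M))).

Definition num_eigs (M : 'M[F]_n) : nat := size (spectrum M).

Definition alg_mult (M : 'M[F]_n) (lam : F) : nat := mup lam (char_poly M).

Definition geo_mult (M : 'M[F]_n) (lam : F) : nat := \rank (eigenspace M lam).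

Definition defectivity (M : 'M[F]_n) : nat :=
  \sum_(lam <- spectrum M) (alg_mult M lam - geo_mult M lam).

Definition nonderogatory (M : 'M[F]_n) : Prop :=
  forall lam, lam \in spectrum M -> geo_mult M lam = 1%N.

End Spectral.

(* Main.v *)
Require Import Defs.
From mathcomp Require Import all_boot all_order all_algebra.
From mathcomp Require Import zify.
Import Order.TTheory GRing.Theory Num.Theory.
Local Open Scope ring_scope.

Lemma sum_count_undup (T : eqType) (r : seq T) :
  (\sum_(x <- undup r) count_mem x r)%N = size r.
Proof.
rewrite -sum1_size -(@big_undup_iterop_count _ _ addn _ _ predT (fun _ => 1%N)).
apply: eq_bigr => x _; case: (count_mem x r) => //= k.
by elim: k => //= k ->.
Qed.

Lemma leq_sum_in (T : eqType) (s : seq T) (F G : T -> nat) :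
  (forall x, x \in s -> (F x <= G x)%N) ->
  (\sum_(x <- s) F x <= \sum_(x <- s) G x)%N.
Proof.
elim: s => [|y s IH] h; first by rewrite !big_nil.
rewrite !big_cons leq_add ?h ?mem_head // IH // => x xs.
by apply: h; rewrite inE xs orbT.
Qed.

Lemma sum_const_in (T : eqType) (s : seq T) (c : nat) :
  (\sum_(x <- s) c)%N = (size s * c)%N.
Proof. by elim: s => [|y s IH]; rewrite ?big_nil ?big_cons ?IH. Qed.

Section S.
Variable n : nat.
Implicit Types M : 'M[Cplx]_n.

Definition rts (M : 'M[Cplx]_n) := sval (@closed_field_poly_normal Cplx (char_poly M)).

Lemma rtsE M : char_poly M = \prod_(z <- rts M) ('X - z%:P).
Proof.
rewrite /rts; case: closed_field_poly_normal => r /= Hr.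
by rewrite {1}Hr (monicP (char_poly_monic M)) scale1r.
Qed.

Lemma in_spec M lam : (lam \in spectrum M) = eigenvalue M lam.
Proof.
by rewrite /spectrum mem_undup eigenvalue_root_char -/(rts M) rtsE root_prod_XsubC.
Qed.

Lemma geo_ge1 M lam : lam \in spectrum M -> (1 <= geo_mult M lam)%N.
Proof.
rewrite in_spec /eigenvalue /geo_mult => H.
by rewrite lt0n mxrank_eq0.
Qed.

Lemma geo_le1 M : nonderogatory M -> forall lam, (geo_mult M lam <= 1)%N.
Proof.
move=> H lam; case: (boolP (lam \in spectrum M)) => [/H -> //|].
rewrite in_spec /eigenvalue negbK /geo_mult => /eqP ->.
by rewrite mxrank0.
Qed.

Lemma geo_bound (A B : 'M[Cplx]_n) lam : nonderogatory (A + B) ->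
  (geo_mult A lam <= \rank B + 1)%N.
Proof.
move=> H; have := @geo_le1 _ H lam.
rewrite /geo_mult.
set K := eigenspace A lam.
have Hc : (K :&: kermx B <= eigenspace (A + B) lam)%MS.
  apply/eigenspaceP; rewrite mulmxDr.
  have /eigenspaceP -> := capmxSl K (kermx B).
  have /sub_kermxP -> := capmxSr K (kermx B).
  by rewrite addr0.
have h1 := mxrankS Hc.
have h2 := mxrank_sum_cap K (kermx B).
have h3 := rank_leq_col (K + kermx B)%MS.
have h4 := mxrank_ker B.
have h5 := rank_leq_row B.
move=> h0; move: h0 h1 h2 h3 h4 h5; clearbody K; set a := \rank (K :&: _); set b := \rank (K + _)%MS; set c := \rank (kermx _); set e := \rank (eigenspace _ _); set f := \rank K; set g := \rank B; clearbody a b c e f g; lia.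
Qed.

Lemma alg_sum M : (\sum_(lam <- spectrum M) alg_mult M lam)%N = n.
Proof.
rewrite /spectrum -/(rts M) /alg_mult.
under eq_bigr => x _ do rewrite rtsE mu_prod_XsubC.
rewrite sum_count_undup.
have := size_char_poly M; rewrite rtsE size_prod_XsubC.
by case.
Qed.

Lemma alg_ge1 M lam : lam \in spectrum M -> (1 <= alg_mult M lam)%N.
Proof.
rewrite /alg_mult rtsE mu_prod_XsubC /spectrum -/(rts M) mem_undup.
by rewrite -has_pred1 has_count.
Qed.

End S.

Theorem corollary4p3 (n : nat) (A B : 'M[Cplx]_n) :
  nonderogatory (A + B) ->
  ((n%:R - (defectivity A)%:R) / ((\rank B)%:R + 1) <= (num_eigs A)%:R :> rat)
  /\ ((num_eigs A)%:R <= n%:R - (defectivity A)%:R :> rat).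
Proof.
move=> H.
have Hup : (defectivity A + num_eigs A <= n)%N.
  rewrite /defectivity /num_eigs -sum1_size -big_split /= -[X in (_ <= X)%N](alg_sum _ A).
  idtac.
  apply: leq_sum_in => lam Hl.
  have h1 := @geo_ge1 _ _ _ Hl; have h2 := @alg_ge1 _ _ _ Hl.
  apply: (@leq_trans (alg_mult A lam - 1 + 1)); last by rewrite subnK.
  by rewrite leq_add2r leq_sub2l.
have Hlo : (n <= defectivity A + num_eigs A * (\rank B + 1))%N.
  rewrite /defectivity /num_eigs -[X in (X <= _)%N](alg_sum _ A).
  rewrite -sum_const_in -big_split /=.
  idtac.
  apply: (@leq_sum_in _ (spectrum A) (alg_mult A)) => lam Hl.
  have hg := @geo_bound _ A B lam H.
  by rewrite addnC -leq_subLR leq_sub2l.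
split.
  have hk : (0:rat) < (\rank B)%:R + 1 by rewrite ltr_wpDl.
  rewrite ler_pdivrMr // lerBlDl.
  have -> : (defectivity A)%:R + (num_eigs A)%:R * ((\rank B)%:R + 1)
     = (defectivity A + num_eigs A * (\rank B + 1))%N%:R :> rat.
    by rewrite natrD natrM natrD.
  by rewrite ler_nat.
by rewrite lerBrDr -natrD ler_nat addnC.
Qed.
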